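(* With the notation below, let $x\in X^{(\boldsymbol\alpha)}$. Then there is a bijection between $H_1\cdot[x]_{H_2}$ (a subset of the orbit set $H_2\backslash X^{(\boldsymbol\alpha)}$ for the action $\varGamma_2$) and $F^{(\boldsymbol\alpha)}\mathbb Z^N\backslash\mathbb Z^N$ that commutes with the action of $H_1$. Here $H_1$ acts on $H_2\backslash X^{(\boldsymbol\alpha)}$ by $f\cdot[z]_{H_2}=[\varGamma_1(f,z)]_{H_2}$ and on $F^{(\boldsymbol\alpha)}\mathbb Z^N\backslash\mathbb Z^N$ by $f\cdot[\boldsymbol\omega]=[\boldsymbol\omega+\psi(f)]$.
   Context: Fix $N\ge1$, integers $m_j\ge1$, $p_j\ge0$ ($1\le j\le N$), and an integer matrix $(B_{j,k})$. For $m\ge1,p\ge0$ let $\Lambda(m,p)=\{(\lambda_i)_{i\in\mathbb Z}: \lambda_i\in\mathbb Z,\ \lambda_1=0,\ \lambda_i\le\lambda_{i+1},\ \lambda_{i+m}=\lambda_i+p\ \forall i\}$, and for a positive common divisor $\alpha$ of $m,p$ (every positive integer divides $0$) let $\Lambda^{(\alpha)}(m,p)=\{\lambda\in\Lambda(m/\alpha,p/\alpha):\lambda\notin\Lambda(m/\alpha',p/\alpha')$ for every common divisor $\alpha'>\alpha\}$. Let $X_1=\mathbb Z^N$ (column vectors), $X_2=\prod_{j}\Lambda(m_j,p_j)$, elements $\boldsymbol\lambda=(\lambda^{(j)}_i)$. $H_2$ is the free abelian group on $s_1,\dots,s_N$; for $g=\sum_kn_ks_k$: $\Upsilon(g,\boldsymbol\lambda)=(\lambda^{(j)}_{n_j+i}-\lambda^{(j)}_{n_j+1})_{i,j}$,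 $\varphi(g,\boldsymbol\omega,\boldsymbol\lambda)=\boldsymbol\omega+(\lambda^{(j)}_{n_j+1}+\sum_kB_{j,k}n_k)_j$, $\varGamma_2(g,(\boldsymbol\omega,\boldsymbol\lambda))=(\varphi(g,\boldsymbol\omega,\boldsymbol\lambda),\Upsilon(g,\boldsymbol\lambda))$. $H_1$ is an abelian group with a surjective group homomorphism $\psi:H_1\to\mathbb Z^N$, acting by $\varGamma_1(f,(\boldsymbol\omega,\boldsymbol\lambda))=(\boldsymbol\omega+\psi(f),\boldsymbol\lambda)$. Fix $\boldsymbol\alpha=(\alpha_j)$ with $\alpha_j$ a positive common divisor of $m_j,p_j$; $X^{(\boldsymbol\alpha)}=X_1\times\prod_j\Lambda^{(\alpha_j)}(m_j,p_j)$ (invariant under $\varGamma_1,\varGamma_2$); $F^{(\boldsymbol\alpha)}_{j,k}=(\delta_{j,k}p_k+B_{j,k}m_k)/\alpha_k$. $F^{(\boldsymbol\alpha)}\mathbb Z^N\backslash\mathbb Z^N$ is the set of cosets of the subgroup $F^{(\boldsymbol\alpha)}\mathbb Z^N\subset\mathbb Z^N$. *)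

(* Defs.v *)
From HB Require Import structures.
From mathcomp Require Import all_boot all_order all_algebra.
Set Implicit Arguments. Unset Strict Implicit. Unset Printing Implicit Defensive.
Import Order.TTheory GRing.Theory Num.Theory.
Local Open Scope ring_scope.

Definition Lam (m p : nat) (l : int -> int) : Prop :=
  l 1 = 0 /\ (forall i : int, l i <= l (i + 1)) /\
  (forall i : int, l (i + m%:Z) = l i + p%:Z).

Definition LamPrim (a m p : nat) (l : int -> int) : Prop :=
  Lam (m %/ a) (p %/ a) l /\
  (forall a' : nat, (a < a')%N -> (a' %| m)%N -> (a' %| p)%N ->
     ~ Lam (m %/ a') (p %/ a') l).

(* X = X_1 x X_2 (ambient): omega in Z^N (column vector), lambda^(j) : Z -> Z *)
Definition X (N : nat) : Type := ('cV[int]_N * ('I_N -> int -> int))%type.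

Definition InXalpha (N : nat) (m p alpha : 'I_N -> nat) (z : X N) : Prop :=
  forall j : 'I_N, LamPrim (alpha j) (m j) (p j) (z.2 j).

(* Gamma_2(g, (omega, lambda)), g = sum_k n_k s_k identified with (n_k)_k *)
Definition Gamma2 (N : nat) (B : 'M[int]_N) (g : 'cV[int]_N) (z : X N) : X N :=
  (z.1 + \col_j (z.2 j (g j 0 + 1)) + B *m g,
   fun j i => z.2 j (g j 0 + i) - z.2 j (g j 0 + 1)).

Definition Gamma1 (N : nat) (H1 : zmodType) (psi : H1 -> 'cV[int]_N)
  (f : H1) (z : X N) : X N := (z.1 + psi f, z.2).

Definition orbit2 (N : nat) (B : 'M[int]_N) (z : X N) : X N -> Prop :=
  fun y => exists g : 'cV[int]_N, Gamma2 B g z = y.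

Definition Fmat (N : nat) (m p alpha : 'I_N -> nat) (B : 'M[int]_N) : 'M[int]_N :=
  \matrix_(j, k) ((((j == k)%:Z * (p k)%:Z + B j k * (m k)%:Z) %/ (alpha k)%:Z)%Z).

Definition coset (N : nat) (F : 'M[int]_N) (w : 'cV[int]_N) : 'cV[int]_N -> Prop :=
  fun v => exists u : 'cV[int]_N, v = w + F *m u.

(* Main.v *)
Require Import Defs.
From HB Require Import structures.
From mathcomp Require Import all_boot all_order all_algebra.
From Stdlib Require Import FunctionalExtensionality PropExtensionality.
Import Order.TTheory GRing.Theory Num.Theory.
Local Open Scope ring_scope.

Definition good (l : int -> int) (s c : int) := forall i, l (s + i) = l i + c.

Lemma good_add l s c t d : good l s c -> good l t d -> good l (s + t) (c + d).
Proof. by move=> hs ht i; rewrite -addrA hs ht -addrA (addrC d). Qed.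

Lemma good_neg l s c : good l s c -> good l (- s) (- c).
Proof. by move=> hs i; have := hs (- s + i); rewrite addrA subrr add0r => ->; rewrite addrK. Qed.

Lemma good_natmul l s c (n : nat) : good l s c -> good l (n%:Z * s) (n%:Z * c).
Proof.
move=> hs; elim: n => [|n IH] i; first by rewrite !mul0r add0r addr0.
by rewrite intS !mulrDl !mul1r; apply: good_add.
Qed.

Lemma good_mulz l s c (k : int) : good l s c -> good l (k * s) (k * c).
Proof.
move=> hs; case: k => n; first exact: good_natmul.
rewrite NegzE !mulNr; apply: good_neg; exact: good_natmul.
Qed.

Lemma mono_nat (l : int -> int) : (forall i, l i <= l (i + 1)) -> forall (n : nat) i, l i <= l (i + n%:Z).
Proof.
move=> hm; elim=> [|n IH] i; first by rewrite addr0.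
rewrite (le_trans (IH i)) // intS (addrC 1) addrA; exact: hm.
Qed.

Lemma prim (a m p : nat) (l : int -> int) (g c : int) :
  (0 < a)%N -> (a %| m)%N -> (a %| p)%N -> (0 < m)%N -> LamPrim a m p l ->
  good l g c -> g = (g %/ (m %/ a)%:Z)%Z * (m %/ a)%:Z /\ c = (g %/ (m %/ a)%:Z)%Z * (p %/ a)%:Z.
Proof.
move=> a0 am ap m0 [[l1 [lmon lper]] hprim] hg.
set M := (m %/ a)%N; set P := (p %/ a)%N.
have goodM : good l M%:Z P%:Z by move=> i; rewrite addrC lper.
have Mpos : (0 < M)%N by rewrite divn_gt0 // dvdn_leq.
case: (Bezoutz g M%:Z) => u [v Huv].
have gz : gcdz g M%:Z = (gcdn `|g|%N M)%:Z by [].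
set dn := gcdn `|g|%N M in gz.
have gd : good l dn%:Z (u * c + v * P%:Z).
  by rewrite -gz -Huv; apply: good_add; apply: good_mulz.
set cd := u * c + v * P%:Z in gd.
have dpos : (0 < dn)%N by rewrite gcdn_gt0 Mpos orbT.
have cd0 : 0 <= cd.
  by have := mono_nat l lmon dn 1; rewrite addrC gd l1 !add0r.
clearbody cd; case: cd gd cd0 => [cn|n] gd; last by [].
move=> _.
have hdM : (dn %| M)%N by apply: dvdn_gcdr.
set q := (M %/ dn)%N.
have hM : M = (q * dn)%N by rewrite divnK.
have hP : P = (q * cn)%N.
  have := good_natmul l dn%:Z cn%:Z q gd 0.
  rewrite -!PoszM -hM goodM => /addrI /eqP; rewrite eqz_nat => /eqP //.
have q0 : (0 < q)%N by move: Mpos; rewrite hM muln_gt0 => /andP [].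
have hq1 : q = 1%N.
  case: (leqP q 1) => hq; first by apply/eqP; rewrite eqn_leq hq q0.
  exfalso; apply: (hprim (a * q)%N).
  - by rewrite -{1}(muln1 a) ltn_pmul2l.
  - by rewrite -{1}(divnK am) -/M hM [X in (_ %| X)%N]mulnC mulnA dvdn_mulr.
  - by rewrite -{1}(divnK ap) -/P hP [X in (_ %| X)%N]mulnC mulnA dvdn_mulr.
  have hmm : (m %/ (a * q))%N = dn.
    by rewrite -{1}(divnK am) -/M hM mulnC mulnA mulKn // muln_gt0 a0 q0.
  have hpp : (p %/ (a * q))%N = cn.
    by rewrite -{1}(divnK ap) -/P hP mulnC mulnA mulKn // muln_gt0 a0 q0.
  rewrite hmm hpp; split; first exact: l1.
  split; first exact: lmon.
  by move=> i; rewrite addrC gd.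
have hdn : dn = M by rewrite hM hq1 mul1n.
have := dvdz_gcdl g M%:Z; rewrite gz hdn => /dvdzP [k hk].
have M0 : M%:Z != 0 by rewrite eqz_nat -lt0n.
rewrite hk mulzK //; split => //.
have := good_mulz l M%:Z P%:Z k goodM 0.
by rewrite -hk hg => /addrI.
Qed.

Lemma rearr (V : zmodType) (a c1 s1 c2 s2 : V) :
  a + c1 + s1 + (c2 - c1) + s2 = a + c2 + (s1 + s2).
Proof.
rewrite -!addrA; congr (a + _).
by rewrite (addrCA c2) (addrCA s1 (- c1)) addNKr addrCA.
Qed.

Lemma G2comp N (B : 'M[int]_N) g h (z : X N) :
  Gamma2 B g (Gamma2 B h z) = Gamma2 B (h + g) z.
Proof.
case: z => w l; rewrite /Gamma2 /=; congr pair.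
  rewrite mulmxDr; apply/matrixP => j k; rewrite !mxE rearr. by rewrite (addrA (h j 0)).  
apply: functional_extensionality => j; apply: functional_extensionality => i.
by rewrite !mxE opprB addrA subrK !addrA.
Qed.

Lemma G2id N (B : 'M[int]_N) (z : X N) : (forall j, z.2 j 1 = 0) ->
  Gamma2 B 0 z = z.
Proof.
case: z => w l /= hl; rewrite /Gamma2 /= mulmx0 addr0; congr pair.
  apply/matrixP => j k; rewrite !mxE add0r hl addr0 //.
apply: functional_extensionality => j; apply: functional_extensionality => i.
by rewrite !mxE !add0r hl subr0.
Qed.

Lemma orbitE N (B : 'M[int]_N) (y y' : X N) :
  (forall j, y.2 j 1 = 0) -> (forall j, y'.2 j 1 = 0) ->
  orbit2 B y = orbit2 B y' <-> exists g, Gamma2 B g y = y'.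
Proof.
move=> hy hy'; split.
  move=> e; have : orbit2 B y' y' by exists 0; apply: G2id.
  by rewrite -e.
move=> [g hg].
have hy2 : Gamma2 B (- g) y' = y by rewrite -hg G2comp subrr G2id.
rewrite /orbit2; apply: functional_extensionality => v; apply: propositional_extensionality.
split=> [[h <-]|[h <-]].
  by exists (- g + h); rewrite -G2comp hy2.
by exists (g + h); rewrite -G2comp hg.
Qed.

Lemma cosetE N (F : 'M[int]_N) w w' :
  coset F w = coset F w' <-> exists u, w' = w + F *m u.
Proof.
split.
  move=> e; have : coset F w' w' by exists 0; rewrite mulmx0 addr0.
  by rewrite -e.
move=> [u hu].
rewrite /orbit2 /coset; apply: functional_extensionality => v; apply: propositional_extensionality.
split=> [[t ->]|[t ->]].
  by exists (t - u); rewrite hu mulmxBr (addrC (F *m t)) addrA addrK.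
by exists (u + t); rewrite hu mulmxDr addrA.
Qed.


Definition Mr {N} (m alpha : 'I_N -> nat) : 'rV[int]_N := \row_k ((m k %/ alpha k)%N)%:Z.

Lemma Fdecomp N (m p alpha : 'I_N -> nat) (B : 'M[int]_N) :
  (forall j, (0 < alpha j)%N) -> (forall j, (alpha j %| m j)%N) -> (forall j, (alpha j %| p j)%N) ->
  Fmat m p alpha B = diag_mx (Mr p alpha) + B *m diag_mx (Mr m alpha).
Proof.
move=> ha hm hp; rewrite mul_mx_diag; apply/matrixP => j k; rewrite !mxE.
have a0 : (alpha k)%:Z != 0 by rewrite eqz_nat -lt0n.
rewrite -{1}(divnK (hm k)) -{1}(divnK (hp k)) !PoszM.
case: eqP => [->|_].
  by rewrite mul1r mulrA -mulrDl mulzK // mulr1n.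
by rewrite mul0r add0r mulrA mulzK // mulr0n add0r.
Qed.

Arguments prim {a m p l g c}.

Section Core.
Variables (N : nat) (m p alpha : 'I_N -> nat) (B : 'M[int]_N).
Hypotheses (hm1 : forall j, (0 < m j)%N) (ha : forall j, (0 < alpha j)%N)
  (ham : forall j, (alpha j %| m j)%N) (hap : forall j, (alpha j %| p j)%N).

Lemma core_fwd (l : 'I_N -> int -> int) w w' g :
  (forall j, LamPrim (alpha j) (m j) (p j) (l j)) ->
  Gamma2 B g (w, l) = (w', l) -> exists u, w' = w + Fmat m p alpha B *m u.
Proof.
move=> hl [e1 e2].
have hg j : good (l j) (g j 0) (l j (g j 0 + 1)).
  move=> i; have := congr1 (fun F => F j i) e2 => /= <-.
  by rewrite subrK.
have hk j := prim (ha j) (ham j) (hap j) (hm1 j) (hl j) (hg j).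
exists (\col_j (divz (g j 0) (m j %/ alpha j)%N%:Z)).
rewrite -e1 Fdecomp // mulmxDl -mulmxA.
have -> : diag_mx (Mr m alpha) *m (\col_j (divz (g j 0) (m j %/ alpha j)%N%:Z)) = g.
  apply/matrixP => j k; rewrite mul_diag_mx !mxE (ord1 k) mulrC.
  by rewrite -(hk j).1.
rewrite -addrA; congr (w + (_ + _)); apply/matrixP => j k.
by rewrite mul_diag_mx !mxE (hk j).2 mulrC; case: k => -[].
Qed.

Lemma core_bwd (l : 'I_N -> int -> int) w w' u :
  (forall j, LamPrim (alpha j) (m j) (p j) (l j)) ->
  w' = w + Fmat m p alpha B *m u ->
  Gamma2 B (diag_mx (Mr m alpha) *m u) (w, l) = (w', l).
Proof.
move=> hl hu.
have gj j : (diag_mx (Mr m alpha) *m u) j 0 = (m j %/ alpha j)%N%:Z * u j 0.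
  by rewrite mul_diag_mx mxE mxE.
have hg j : good (l j) ((m j %/ alpha j)%N%:Z * u j 0) (u j 0 * (p j %/ alpha j)%N%:Z).
  have [[l1 [lmon lper]] _] := hl j.
  rewrite mulrC; apply: good_mulz => i; by rewrite addrC lper.
have l1 j : l j 1 = 0 by have [[l1 _] _] := hl j.
rewrite /Gamma2 /=; congr pair.
  rewrite hu Fdecomp // mulmxDl -mulmxA -addrA; congr (w + (_ + _)).
  apply/matrixP => j k; rewrite (ord1 k) [LHS]mxE gj hg l1 add0r.
  by rewrite mul_diag_mx mxE mxE mulrC.
apply: functional_extensionality => j; apply: functional_extensionality => i.
by rewrite gj !hg l1 add0r addrK.
Qed.
End Core.

Lemma G21 N (B : 'M[int]_N) (H1 : zmodType) (psi : H1 -> 'cV[int]_N) g f (y : X N) :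
  Gamma2 B g (Gamma1 psi f y) = Gamma1 psi f (Gamma2 B g y).
Proof.
case: y => a l; rewrite /Gamma2 /Gamma1 /=; congr pair.
by rewrite -!addrA; congr (_ + _); rewrite addrC -addrA.
Qed.

Lemma G1shift N (B : 'M[int]_N) (H1 : zmodType) (psi : H1 -> 'cV[int]_N) f (y y' : X N) :
  orbit2 B y = orbit2 B y' -> orbit2 B (Gamma1 psi f y) = orbit2 B (Gamma1 psi f y').
Proof.
move=> e; rewrite /orbit2; apply: functional_extensionality => v.
apply: propositional_extensionality; split=> -[g <-].
  have : orbit2 B y (Gamma2 B g y) by exists g.
  by rewrite e => -[g' hg']; exists g'; rewrite !G21 hg'.
have : orbit2 B y' (Gamma2 B g y') by exists g.
by rewrite -e => -[g' hg']; exists g'; rewrite !G21 hg'.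
Qed.

Theorem mainTheorem7 (N : nat) (m p alpha : 'I_N -> nat) (B : 'M[int]_N)
  (H1 : zmodType) (psi : H1 -> 'cV[int]_N)
  (hN : (1 <= N)%N)
  (hm : forall j, (1 <= m j)%N)
  (halpha : forall j, (0 < alpha j)%N)
  (halpha_m : forall j, (alpha j %| m j)%N)
  (halpha_p : forall j, (alpha j %| p j)%N)
  (psi_add : forall a b : H1, psi (a + b) = psi a + psi b)
  (psi_surj : forall v : 'cV[int]_N, exists f : H1, psi f = v)
  (x : X N) (hx : InXalpha m p alpha x) :
  let F := Fmat m p alpha B in
  (* H_1 . [x]_{H_2} : the set of orbits [Gamma_1(f,x)]_{H_2} *)
  let inH1x := fun S : X N -> Prop =>
    exists f : H1, S = orbit2 B (Gamma1 psi f x) in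
  (* F Z^N \ Z^N : the set of cosets *)
  let inQ := fun C : 'cV[int]_N -> Prop => exists w, C = coset F w in
  exists Phi : (X N -> Prop) -> ('cV[int]_N -> Prop),
    (forall S, inH1x S -> inQ (Phi S)) /\
    (forall S T, inH1x S -> inH1x T -> Phi S = Phi T -> S = T) /\
    (forall C, inQ C -> exists S, inH1x S /\ Phi S = C) /\
    (* H_1-equivariance: Phi (f . [z]) = f . Phi [z] *)
    (forall (f : H1) (z : X N) (w : 'cV[int]_N),
        inH1x (orbit2 B z) -> Phi (orbit2 B z) = coset F w ->
        Phi (orbit2 B (Gamma1 psi f z)) = coset F (w + psi f)).
Proof.
move=> F inH1x inQ.
have l1 j : x.2 j 1 = 0 by have [[l1 _] _] := hx j.
have Key f f' : orbit2 B (Gamma1 psi f x) = orbit2 B (Gamma1 psi f' x) <->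
                coset F (psi f) = coset F (psi f').
  rewrite orbitE // cosetE; split.
    move=> [g hg].
    have [u hu] := @core_fwd _ _ _ _ B hm halpha halpha_m halpha_p _ _ _ _ hx hg.
    by exists u; apply: (addrI x.1); rewrite addrA.
  move=> [u hu]; exists (diag_mx (Mr m alpha) *m u).
  by rewrite /Gamma1; apply: (@core_bwd _ _ _ _ B halpha halpha_m halpha_p _ _ _ _ hx); rewrite hu addrA.
pose Phi := fun (S : X N -> Prop) (v : 'cV[int]_N) =>
  exists f, S = orbit2 B (Gamma1 psi f x) /\ coset F (psi f) v.
have PhiE f : Phi (orbit2 B (Gamma1 psi f x)) = coset F (psi f).
  apply: functional_extensionality => v; apply: propositional_extensionality.
  split; last by move=> h; exists f.
  by move=> [f' [e c]]; move/Key: e => ->.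
exists Phi; split; [|split; [|split]].
- by move=> S [f ->]; exists (psi f); rewrite PhiE.
- by move=> S T [f ->] [f' ->]; rewrite !PhiE => /Key.
- move=> C [w ->]; have [f hf] := psi_surj w.
  by exists (orbit2 B (Gamma1 psi f x)); split; [exists f | rewrite PhiE hf].
- move=> f z w [f0 e] hw.
  rewrite (@G1shift _ B _ psi f _ _ e).
  have -> : Gamma1 psi f (Gamma1 psi f0 x) = Gamma1 psi (f0 + f) x.
    by rewrite /Gamma1 /= psi_add addrA.
  rewrite PhiE; rewrite e PhiE in hw.
  move/cosetE: hw => [u hu]; apply/cosetE; exists u.
  by rewrite psi_add hu addrAC.
Qed.
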